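(* Assume (F), fix $\alpha\in\,]0,1[$, and let $0\le u^+<u^-\le V$ with $\hat\rho_{u^-}\le\check\rho_{u^+}$. Then $$u^--u^+\ \ge\ \frac{\beta}{2}\,\big(\hat\rho_{u^-}-\check\rho_{u^-}\big).$$
   Context: Hypothesis (F): $R>0$; $f\in C^2([0,R];[0,+\infty))$ with $f(\rho)=\rho v(\rho)$, $v\in C^2([0,R];[0,+\infty))$; $f(0)=f(R)=0$; there are $B\ge\beta>0$ with $-B\le f''\le-\beta$ on $[0,R]$; $v'(\rho)<0$ for $\rho\in\,]0,R[$. Let $V:=\max_{[0,R]}v=v(0)$. Define $f_\alpha(\rho):=\alpha f(\rho/\alpha)$ for $\rho\in[0,\alpha R]$. For $u\in[0,V]$: $\tilde\rho_u$ is the unique solution of $f_\alpha'(\rho)=u$; $\varphi_u(\rho):=f_\alpha(\tilde\rho_u)+u(\rho-\tilde\rho_u)$ for $\rho\in[0,R]$; $\mathcal I_u:=\{\rho\in[0,R]: f(\rho)=\varphi_u(\rho)\}$, $\check\rho_u:=\min\mathcal I_u$, $\hat\rho_u:=\max\mathcal I_u$. *)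

(* Defs.v *)
From Stdlib Require Import Reals Lra.
Open Scope R_scope.

Definition deriv_within (a b : R) (g : R -> R) (x l : R) : Prop :=
  forall eps, 0 < eps -> exists delta, 0 < delta /\
    forall y, a <= y <= b -> y <> x -> Rabs (y - x) < delta ->
      Rabs ((g y - g x) / (y - x) - l) < eps.

Definition cont_within (a b : R) (g : R -> R) (x : R) : Prop :=
  forall eps, 0 < eps -> exists delta, 0 < delta /\
    forall y, a <= y <= b -> Rabs (y - x) < delta -> Rabs (g y - g x) < eps.

Definition C2_on (a b : R) (g g1 g2 : R -> R) : Prop :=
  (forall x, a <= x <= b -> deriv_within a b g x (g1 x)) /\
  (forall x, a <= x <= b -> deriv_within a b g1 x (g2 x)) /\
  (forall x, a <= x <= b -> cont_within a b g2 x).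

Definition HypF (Rm : R) (f f1 f2 v v1 v2 : R -> R) (B beta : R) : Prop :=
  0 < Rm /\
  C2_on 0 Rm f f1 f2 /\ (forall r, 0 <= r <= Rm -> 0 <= f r) /\
  C2_on 0 Rm v v1 v2 /\ (forall r, 0 <= r <= Rm -> 0 <= v r) /\
  (forall r, 0 <= r <= Rm -> f r = r * v r) /\
  f 0 = 0 /\ f Rm = 0 /\
  B >= beta /\ beta > 0 /\
  (forall r, 0 <= r <= Rm -> - B <= f2 r <= - beta) /\
  (forall r, 0 < r < Rm -> v1 r < 0).

Definition f_alpha (alpha : R) (f : R -> R) (r : R) : R := alpha * f (r / alpha).

Definition is_rho_tilde (Rm alpha : R) (f : R -> R) (u rt : R) : Prop :=
  0 <= rt <= alpha * Rm /\ deriv_within 0 (alpha * Rm) (f_alpha alpha f) rt u.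

Definition phi (alpha : R) (f : R -> R) (rt u r : R) : R :=
  f_alpha alpha f rt + u * (r - rt).

Definition in_I (Rm alpha : R) (f : R -> R) (rt u r : R) : Prop :=
  0 <= r <= Rm /\ f r = phi alpha f rt u r.

Definition is_min_I (Rm alpha : R) (f : R -> R) (rt u m : R) : Prop :=
  in_I Rm alpha f rt u m /\ forall r, in_I Rm alpha f rt u r -> m <= r.

Definition is_max_I (Rm alpha : R) (f : R -> R) (rt u m : R) : Prop :=
  in_I Rm alpha f rt u m /\ forall r, in_I Rm alpha f rt u r -> r <= m.

(* Main.v *)
Require Import Defs.
From Stdlib Require Import Reals Lra Psatz.
Open Scope R_scope.

Definition cl (a b x : R) := Rmax a (Rmin b x).

Lemma cl_in a b x : a <= b -> a <= cl a b x <= b.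
Proof. intros; unfold cl, Rmax, Rmin; destruct (Rle_dec b x); destruct Rle_dec; lra. Qed.
Lemma cl_id a b x : a <= x <= b -> cl a b x = x.
Proof. intros; unfold cl, Rmax, Rmin; destruct (Rle_dec b x); destruct Rle_dec; lra. Qed.
Lemma cl_lip a b x y : a <= b -> Rabs (cl a b y - cl a b x) <= Rabs (y - x).
Proof.
  intros; unfold cl, Rmax, Rmin; destruct (Rle_dec b x); destruct (Rle_dec b y);
  repeat destruct Rle_dec; unfold Rabs; repeat destruct Rcase_abs; lra.
Qed.

Lemma small_mult c z eps : 0 < eps -> Rabs z < eps / (Rabs c + 1) -> Rabs c * Rabs z < eps.
Proof.
  intros He Hz. pose proof (Rabs_pos c). pose proof (Rabs_pos z).
  assert (Hl : 0 < Rabs c + 1) by lra.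
  set (w := / (Rabs c + 1)) in *.
  assert (Hw : (Rabs c + 1) * w = 1) by (unfold w; field; lra).
  assert (0 < w) by (unfold w; apply Rinv_0_lt_compat; lra).
  unfold Rdiv in Hz. fold w in Hz.
  assert (Rabs z * (Rabs c + 1) < eps * w * (Rabs c + 1)) by (apply Rmult_lt_compat_r; lra).
  nra.
Qed.

Lemma cont_cl a b g x : a <= b -> a <= x <= b -> cont_within a b g x ->
  continuity_pt (fun t => g (cl a b t)) x.
Proof.
  intros Hab Hx Hc eps Heps.
  destruct (Hc eps Heps) as [d [Hd H]].
  exists d; split; [lra|].
  intros y [_ Hy]. simpl in *. unfold R_dist in *.
  assert (E := cl_id a b x Hx). pose proof (cl_lip a b x y Hab) as L.
  rewrite E in *. apply H. apply cl_in; lra. lra.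
Qed.

Lemma deriv_cl a b g x l : a < x < b -> deriv_within a b g x l ->
  derivable_pt_lim (fun t => g (cl a b t)) x l.
Proof.
  intros Hx Hd eps Heps.
  destruct (Hd eps Heps) as [d [Hdp H]].
  assert (Hp : 0 < Rmin d (Rmin (x-a) (b-x))) by (repeat apply Rmin_pos; lra).
  exists (mkposreal _ Hp). intros h Hh Hha. simpl in Hha.
  assert (Hm1 := Rmin_l d (Rmin (x-a) (b-x))).
  assert (Hm2 := Rmin_r d (Rmin (x-a) (b-x))).
  assert (Hm3 := Rmin_l (x-a) (b-x)). assert (Hm4 := Rmin_r (x-a) (b-x)).
  assert (Hh2 : - (Rmin d (Rmin (x-a) (b-x))) < h < Rmin d (Rmin (x-a) (b-x)))
    by (unfold Rabs in Hha; destruct (Rcase_abs h); lra).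
  rewrite (cl_id a b (x+h)) by lra. rewrite (cl_id a b x) by lra.
  assert (E : x + h - x = h) by ring.
  specialize (H (x+h)). rewrite E in H. apply H; [lra | intro; apply Hh; lra | lra].
Qed.

Lemma deriv_cont a b g x l : deriv_within a b g x l -> cont_within a b g x.
Proof.
  intros Hd eps Heps.
  destruct (Hd 1 Rlt_0_1) as [d [Hdp H]].
  assert (Hl: 0 < Rabs l + 1) by (pose proof (Rabs_pos l); lra).
  exists (Rmin d (eps / (Rabs l + 1))). split.
  { apply Rmin_pos; [lra| apply Rdiv_lt_0_compat; lra]. }
  intros y Hy Hyx.
  assert (Hm1 := Rmin_l d (eps/(Rabs l+1))). assert (Hm2 := Rmin_r d (eps/(Rabs l+1))).
  destruct (Req_dec y x) as [->|Hne].
  { replace (g x - g x) with 0 by ring. rewrite Rabs_R0; lra. }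
  specialize (H y Hy Hne ltac:(lra)).
  set (q := (g y - g x)/(y-x)) in H.
  assert (E : g y - g x = q * (y - x)) by (unfold q; field; intro; apply Hne; lra).
  rewrite E, Rabs_mult.
  assert (Hq : Rabs q < Rabs l + 1).
  { replace q with ((q - l) + l) by ring. pose proof (Rabs_triang (q-l) l). lra. }
  assert (Hyx2: Rabs (y-x) < eps/(Rabs l+1)) by lra.
  assert (Rabs (y-x) * (Rabs l + 1) < eps/(Rabs l +1) * (Rabs l + 1)) by (apply Rmult_lt_compat_r; lra).
  replace (eps/(Rabs l +1) * (Rabs l + 1)) with eps in H0 by (field; lra).
  pose proof (Rabs_pos (y-x)). pose proof (Rabs_pos q). nra.
Qed.

Lemma MVT_within a b g g' : a < b ->
  (forall x, a <= x <= b -> deriv_within a b g x (g' x)) ->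
  exists c, a < c < b /\ g b - g a = g' c * (b - a).
Proof.
  intros Hab Hd.
  set (e := fun t => g (cl a b t)).
  assert (Hder : forall c, a < c < b -> derivable_pt_lim e c (g' c)).
  { intros; apply deriv_cl; auto; apply Hd; lra. }
  assert (pr1 : forall c, a < c < b -> derivable_pt e c).
  { intros c Hc; exact (exist _ (g' c) (Hder c Hc)). }
  assert (pr2 : forall c, a < c < b -> derivable_pt id c) by (intros; apply derivable_pt_id).
  destruct (MVT e id a b pr1 pr2 Hab) as [c [P E]].
  - intros c Hc; apply cont_cl; try lra. apply deriv_cont with (g' c); apply Hd; auto.
  - intros; apply derivable_continuous_pt, derivable_pt_id.
  - exists c; split; auto.
    rewrite (derive_pt_eq_0 e c (g' c) (pr1 c P) (Hder c P)) in E.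
    rewrite (derive_pt_eq_0 id c 1 (pr2 c P) (derivable_pt_lim_id c)) in E.
    unfold e, id in E. rewrite !cl_id in E by lra. lra.
Qed.

Lemma deriv_sub a b a' b' g x l : a <= a' -> b' <= b -> deriv_within a b g x l -> deriv_within a' b' g x l.
Proof. intros H1 H2 Hd eps Heps. destruct (Hd eps Heps) as [d [Hd' H]]. exists d; split; auto. intros y Hy; apply H; lra. Qed.

Lemma deriv_plus a b g h x l m : deriv_within a b g x l -> deriv_within a b h x m ->
  deriv_within a b (fun t => g t + h t) x (l + m).
Proof.
  intros Hg Hh eps Heps.
  destruct (Hg (eps/2) ltac:(lra)) as [d1 [Hd1 H1]].
  destruct (Hh (eps/2) ltac:(lra)) as [d2 [Hd2 H2]].
  exists (Rmin d1 d2); split; [apply Rmin_pos; lra|].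
  intros y Hy Hne Hyd.
  assert (Hm1 := Rmin_l d1 d2). assert (Hm2 := Rmin_r d1 d2).
  specialize (H1 y Hy Hne ltac:(lra)). specialize (H2 y Hy Hne ltac:(lra)).
  replace ((g y + h y - (g x + h x)) / (y - x) - (l + m)) with
    (((g y - g x)/(y-x) - l) + ((h y - h x)/(y-x) - m)) by (field; intro; apply Hne; lra).
  pose proof (Rabs_triang ((g y - g x)/(y-x) - l) ((h y - h x)/(y-x) - m)). lra.
Qed.

Lemma deriv_quad a b x0 A B C x :
  deriv_within a b (fun t => A + B*(t-x0) + C*((t-x0)*(t-x0))) x (B + 2*C*(x-x0)).
Proof.
  intros eps Heps.
  assert (Hl: 0 < Rabs C + 1) by (pose proof (Rabs_pos C); lra).
  exists (eps / (Rabs C + 1)); split; [apply Rdiv_lt_0_compat; lra|].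
  intros y Hy Hne Hyd.
  replace ((A + B * (y - x0) + C * ((y - x0) * (y - x0)) - (A + B * (x - x0) + C * ((x - x0) * (x - x0)))) / (y - x) - (B + 2 * C * (x - x0))) with (C * (y - x)) by (field; intro; apply Hne; lra).
  rewrite Rabs_mult. apply small_mult; auto.
Qed.

Lemma deriv_unique a b g x l1 l2 : a < b -> a <= x <= b ->
  deriv_within a b g x l1 -> deriv_within a b g x l2 -> l1 = l2.
Proof.
  intros Hab Hx H1 H2.
  destruct (Req_dec l1 l2) as [|Hne]; auto. exfalso.
  assert (Hp : 0 < Rabs (l1 - l2)) by (apply Rabs_pos_lt; intro; apply Hne; lra).
  destruct (H1 (Rabs (l1 - l2) / 2) ltac:(lra)) as [d1 [Hd1 K1]].
  destruct (H2 (Rabs (l1 - l2) / 2) ltac:(lra)) as [d2 [Hd2 K2]].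
  assert (key : forall y, a <= y <= b -> y <> x -> Rabs (y-x) < d1 -> Rabs (y-x) < d2 -> False).
  { intros y Hy Hn Y1 Y2. specialize (K1 y Hy Hn Y1). specialize (K2 y Hy Hn Y2).
    set (q := (g y - g x) / (y - x)) in *.
    assert (Rabs (l1 - l2) <= Rabs (q - l2) + Rabs (q - l1)).
    { replace (l1 - l2) with ((q - l2) + - (q - l1)) by ring.
      rewrite <- (Rabs_Ropp (q - l1)). apply Rabs_triang. }
    lra. }
  set (m := Rmin d1 (Rmin d2 (b-a))).
  assert (Hm1 := Rmin_l d1 (Rmin d2 (b-a))). assert (Hm2 := Rmin_r d1 (Rmin d2 (b-a))).
  assert (Hm3 := Rmin_l d2 (b-a)). assert (Hm4 := Rmin_r d2 (b-a)).
  assert (0 < m) by (unfold m; repeat apply Rmin_pos; lra). fold m in Hm1, Hm2.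
  destruct (Rle_dec (x + m/2) b).
  - apply (key (x + m/2)); try lra.
    + replace (x + m/2 - x) with (m/2) by ring. rewrite Rabs_pos_eq; lra.
    + replace (x + m/2 - x) with (m/2) by ring. rewrite Rabs_pos_eq; lra.
  - apply (key (x - m/2)); try lra.
    + replace (x - m/2 - x) with (-(m/2)) by ring. rewrite Rabs_Ropp, Rabs_pos_eq; lra.
    + replace (x - m/2 - x) with (-(m/2)) by ring. rewrite Rabs_Ropp, Rabs_pos_eq; lra.
Qed.

Lemma deriv_falpha Rm alpha f f1 rt : 0 < alpha -> 0 <= rt <= alpha*Rm ->
  deriv_within 0 Rm f (rt/alpha) (f1 (rt/alpha)) ->
  deriv_within 0 (alpha*Rm) (f_alpha alpha f) rt (f1 (rt/alpha)).
Proof.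
  intros Ha Hrt Hd eps Heps. destruct (Hd eps Heps) as [d [Hdp H]].
  exists (alpha*d); split; [apply Rmult_lt_0_compat; lra|].
  intros y Hy Hne Hyd. unfold f_alpha.
  assert (E: (alpha * f (y/alpha) - alpha * f (rt/alpha)) / (y - rt) =
             (f (y/alpha) - f (rt/alpha)) / (y/alpha - rt/alpha)).
  { field. repeat split; try lra; intro; apply Hne; lra. }
  rewrite E.
  assert (Ey: y = alpha*(y/alpha)) by (field; lra).
  assert (Er: rt = alpha*(rt/alpha)) by (field; lra).
  apply H.
  - split; nra.
  - intro E2. apply Hne. rewrite Ey, Er, E2. ring.
  - replace (y/alpha - rt/alpha) with ((y - rt) * /alpha) by (field; lra).
    assert (0 < /alpha) by (apply Rinv_0_lt_compat; lra).
    assert (alpha * /alpha = 1) by (field; lra).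
    rewrite Rabs_mult, (Rabs_pos_eq (/alpha)) by lra. nra.
Qed.

Lemma cont_lin a b g x K L M : cont_within a b g x ->
  cont_within a b (fun t => g t - (K + L * (t - M))) x.
Proof.
  intros Hc eps Heps.
  destruct (Hc (eps/2) ltac:(lra)) as [d [Hd H]].
  assert (Hl: 0 < Rabs L + 1) by (pose proof (Rabs_pos L); lra).
  exists (Rmin d ((eps/2) / (Rabs L + 1))); split.
  { apply Rmin_pos; [lra| apply Rdiv_lt_0_compat; lra]. }
  intros y Hy Hyx.
  assert (Hm1 := Rmin_l d ((eps/2)/(Rabs L+1))). assert (Hm2 := Rmin_r d ((eps/2)/(Rabs L+1))).
  specialize (H y Hy ltac:(lra)).
  assert (Hs := small_mult L (y - x) (eps/2) ltac:(lra) ltac:(lra)).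
  replace (g y - (K + L * (y - M)) - (g x - (K + L * (x - M)))) with
    ((g y - g x) + - (L * (y - x))) by ring.
  pose proof (Rabs_triang (g y - g x) (- (L * (y - x)))).
  rewrite Rabs_Ropp, Rabs_mult in H0. lra.
Qed.

Theorem mainTheorem4
  (Rm : R) (f f1 f2 v v1 v2 : R -> R) (B beta : R)
  (HF : HypF Rm f f1 f2 v v1 v2 B beta)
  (alpha : R) (Halpha : 0 < alpha < 1)
  (up um : R) (Hu : 0 <= up < um /\ um <= v 0)
  (rtp rtm : R)
  (Hrtp : is_rho_tilde Rm alpha f up rtp)
  (Hrtm : is_rho_tilde Rm alpha f um rtm)
  (chk_m hat_m chk_p : R)
  (Hchk_m : is_min_I Rm alpha f rtm um chk_m)
  (Hhat_m : is_max_I Rm alpha f rtm um hat_m)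
  (Hchk_p : is_min_I Rm alpha f rtp up chk_p)
  (Hord : hat_m <= chk_p) :
  um - up >= beta / 2 * (hat_m - chk_m).
Proof.
  destruct HF as [HR [[Hd1 [Hd2 Hc2]] [_ [_ [_ [_ [Hf0 [HfR [HB [Hb [Hf2 _]]]]]]]]]]].
  assert (F1 : forall x y, 0 <= x -> x <= y -> y <= Rm -> f1 y - f1 x <= - beta * (y - x)).
  { intros x y H1 H2 H3. destruct (Req_dec x y) as [->|Hne]; [lra|].
    destruct (MVT_within x y f1 f2) as [c [Hc E]]; [lra| |].
    - intros t Ht. apply (deriv_sub 0 Rm); try lra. apply Hd2; lra.
    - rewrite E. assert (f2 c <= - beta) by (apply Hf2; lra). nra. }
  assert (F2 : forall x y, 0 <= x -> x <= y -> y <= Rm -> f y <= f x + f1 x * (y - x)).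
  { intros x y H1 H2 H3. destruct (Req_dec x y) as [->|Hne]; [lra|].
    destruct (MVT_within x y f f1) as [c [Hc E]]; [lra| |].
    - intros t Ht. apply (deriv_sub 0 Rm); try lra. apply Hd1; lra.
    - assert (f1 c - f1 x <= - beta * (c - x)) by (apply F1; lra).
      assert (0 <= beta * (c - x)) by (apply Rmult_le_pos; lra).
      assert (0 <= (f1 x - f1 c)*(y-x)) by (apply Rmult_le_pos; lra). nra. }
  assert (F3 : forall x y, 0 <= y -> y <= x -> x <= Rm ->
            f y <= f x + f1 x * (y - x) - beta / 2 * ((y - x) * (y - x))).
  { intros x y H1 H2 H3. destruct (Req_dec x y) as [->|Hne]; [lra|].
    destruct (MVT_within y x (fun t => f t + (0 + (- f1 x) * (t - x) + (beta/2) * ((t - x) * (t - x))))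
                (fun t => f1 t + (- f1 x + 2 * (beta/2) * (t - x)))) as [c [Hc E]]; [lra| |].
    - intros t Ht.
      apply (deriv_plus y x f (fun t => 0 + (- f1 x) * (t - x) + (beta/2) * ((t - x) * (t - x)))).
      + apply (deriv_sub 0 Rm); try lra. apply Hd1; lra.
      + apply deriv_quad.
    - simpl in E. assert (f1 x - f1 c <= - beta * (x - c)) by (apply F1; lra). nra. }
  destruct Hrtp as [Hrtpb Hrtpd].
  set (x0 := rtp / alpha).
  assert (Erp : rtp = alpha * x0) by (unfold x0; field; lra).
  assert (Hx0 : 0 <= x0 <= Rm) by (rewrite Erp in Hrtpb; split; nra).
  assert (Hup : up = f1 x0).
  { apply (deriv_unique 0 (alpha*Rm) (f_alpha alpha f) rtp); auto; try nra.
    apply deriv_falpha; try lra. apply Hd1; auto. }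
  set (h := fun t => f t - phi alpha f rtp up t).
  assert (Hh : forall t, h t = f t - (alpha * f x0 + up * (t - rtp))) by (intros; reflexivity).
  assert (Hfx0 : 0 <= f x0 - x0 * f1 x0).
  { pose proof (F3 x0 0 ltac:(lra) ltac:(lra) ltac:(lra)). nra. }
  assert (Hh0 : h 0 <= 0) by (rewrite Hh, Hf0, Erp; nra).
  assert (Hhx0 : 0 <= h x0) by (rewrite Hh, Erp; nra).
  destruct Hchk_p as [[Hcpb Hcpe] Hcpmin].
  assert (Hinz : forall z, 0 <= z <= x0 -> h z = 0 -> chk_p <= z).
  { intros z Hz Hhz. apply Hcpmin. split; [lra|]. unfold h in Hhz. lra. }
  assert (Hcx : chk_p <= x0).
  { destruct (Req_dec (h 0) 0) as [E0|N0]; [pose proof (Hinz 0 ltac:(lra) E0); lra|].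
    destruct (Req_dec (h x0) 0) as [E1|N1]; [apply Hinz; lra|].
    destruct (Rle_lt_dec x0 0) as [Hle|Hlt].
    { assert (x0 = 0) by lra. subst x0. exfalso. rewrite H in N1, Hhx0. lra. }
    destruct (Ranalysis5.IVT_interv (fun t => h (cl 0 x0 t)) 0 x0) as [z [Hz Ez]]; auto.
    - intros a Ha. apply cont_cl; try lra. unfold h, phi.
      apply cont_lin. apply deriv_cont with (f1 a). apply (deriv_sub 0 Rm); try lra. apply Hd1; lra.
    - rewrite cl_id by lra. lra.
    - rewrite cl_id by lra. lra.
    - rewrite cl_id in Ez by lra. apply Rle_trans with z; [apply Hinz|]; lra. }
  assert (Hf1c : up <= f1 chk_p).
  { destruct (Req_dec chk_p x0) as [->|Hne]; [lra|].
    pose proof (F2 chk_p x0 ltac:(lra) ltac:(lra) ltac:(lra)).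
    assert (h chk_p = 0) by (unfold h; lra).
    rewrite Hh in H0, Hhx0. nra. }
  destruct Hchk_m as [[Hcmb Hcme] Hcmmin].
  destruct Hhat_m as [[Hhmb Hhme] Hhmmax].
  assert (Hd : chk_m <= hat_m) by (apply Hcmmin; split; auto).
  pose proof (F1 hat_m chk_p ltac:(lra) Hord ltac:(lra)) as G1.
  pose proof (F3 hat_m chk_m ltac:(lra) Hd ltac:(lra)) as G3.
  unfold phi in Hcme, Hhme.
  destruct (Req_dec chk_m hat_m) as [E|N]; [rewrite E; lra|].
  assert (f1 hat_m * (hat_m - chk_m) <= (um - beta/2*(hat_m - chk_m)) * (hat_m - chk_m)) by nra.
  assert (f1 hat_m <= um - beta/2*(hat_m - chk_m)).
  { apply Rmult_le_reg_r with (hat_m - chk_m); lra. }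
  nra.
Qed.
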